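(* Let $\mathcal{M}$ be a matroid on $[n]$, $J=J(\mathcal{M})$, and let $v$ be such that $\{v\}$ is independent in $\mathcal{M}$. Let $J\div v$ be the ideal generated by $G(J)-G(J(\mathcal{M}/v))$. Then $$G(J(\mathcal{M}/v))=\{N\in G(J): x_v\nmid N\}\quad\text{and}\quad G(J\div v)=\{N\in G(J):x_v\mid N\}.$$ Furthermore, for every independent set $A$ of $\mathcal{M}$, $G(J(\mathcal{M}/A))=\{N\in G(J):\operatorname{supp}N\cap A=\emptyset\}$.
   Context: $R=\mathbb{K}[x_1,\ldots,x_n]$, $\mathbb{K}$ a field. For a matroid $\mathcal{N}$ on $E\subseteq[n]$, $J(\mathcal{N})=\bigcap_{F\in\mathcal{B}(\mathcal{N})}(x_i:i\in F)$ formed in $\mathbb{K}[x_i:i\in E]$ and extended to $R$. $\mathcal{M}/A$ is the contraction by the independent set $A$ (matroid on $[n]-A$ whose independent sets are the $I$ with $I\cup A$ independent). $G(\cdot)$ denotes minimal monomial generators; $\operatorname{supp}N=\{i:x_i\mid N\}$. *)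

(* Defs.v *)
From HB Require Import structures.
From mathcomp Require Import all_boot all_algebra.
From mathcomp Require Import mpoly.
Set Implicit Arguments. Unset Strict Implicit. Unset Printing Implicit Defensive.
Import GRing.Theory.
Local Open Scope ring_scope.

Section Defs.
Variable n : nat.
Variable K : fieldType.
Local Notation R := {mpoly K[n]}.

Definition ideal_gen (S : R -> Prop) : R -> Prop :=
  fun p => exists l : seq (R * R),
    (forall q, q \in l -> S q.2) /\ p = \sum_(q <- l) q.1 * q.2.

Definition ideal_cap (I1 I2 : R -> Prop) : R -> Prop := fun p => I1 p /\ I2 p.

Definition var_ideal (F : {set 'I_n}) : R -> Prop :=
  ideal_gen (fun p => exists2 i, i \in F & p = 'X_i).

Definition is_matroid (E : {set 'I_n}) (ind : {set 'I_n} -> bool) : Prop :=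
  [/\ ind set0,
      (forall I : {set 'I_n}, ind I -> I \subset E),
      (forall I J : {set 'I_n}, ind J -> I \subset J -> ind I) &
      (forall I J : {set 'I_n}, ind I -> ind J -> (#|I| < #|J|)%N ->
          exists2 x, x \in J :\: I & ind (x |: I))].

Definition is_basis (ind : {set 'I_n} -> bool) (B : {set 'I_n}) : Prop :=
  ind B /\ forall I : {set 'I_n}, ind I -> B \subset I -> I = B.

Definition contr_ground (E A : {set 'I_n}) : {set 'I_n} := E :\: A.
Definition contr_ind (E : {set 'I_n}) (ind : {set 'I_n} -> bool) (A : {set 'I_n})
  : {set 'I_n} -> bool :=
  fun I => (I \subset E :\: A) && ind (I :|: A).

Definition Jmat (ind : {set 'I_n} -> bool) : R -> Prop :=
  fun p => forall F, is_basis ind F -> var_ideal F p.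

Definition mingens (I : R -> Prop) : 'X_{1..n} -> Prop :=
  fun m => I 'X_[m] /\ forall m', I 'X_[m'] -> (m' <= m)%MM -> m' = m.

Definition mon_ideal (S : 'X_{1..n} -> Prop) : R -> Prop :=
  ideal_gen (fun p => exists2 m, S m & p = 'X_[m]).

End Defs.

(* Main.v *)
Require Import Defs.
From HB Require Import structures.
From mathcomp Require Import all_boot all_algebra.
From mathcomp Require Import mpoly.
Set Implicit Arguments. Unset Strict Implicit. Unset Printing Implicit Defensive.
Import GRing.Theory.
Local Open Scope ring_scope.

Section Alg.
Variable n : nat.
Variable K : fieldType.
Local Notation R := {mpoly K[n]}.

Lemma lepm_anti (a b : 'X_{1..n}) : (a <= b)%MM -> (b <= a)%MM -> a = b.
Proof.
move=> /mnm_lepP h1 /mnm_lepP h2; apply/mnmP => i.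
by apply/anti_leq; rewrite h1 h2.
Qed.

Lemma mpolyX_inj (s t : 'X_{1..n}) : 'X_[s] = 'X_[t] :> R -> s = t.
Proof.
move=> e; have := congr1 (mcoeff s) e; rewrite !mcoeffX eqxx.
by case: eqP => // _ /eqP; rewrite oner_eq0.
Qed.

Lemma coefMX0 (q : R) s m : ~~ (s <= m)%MM -> (q * 'X_[s])@_m = 0.
Proof.
move=> hs; rewrite mcoeffM big1 // => k /eqP e; rewrite mcoeffX.
case: eqP => [ek|]; last by rewrite mulr0.
by move: hs; have -> : (s <= m)%MM by rewrite e -ek lem_addl.
Qed.

Lemma ideal_gen_X (S : R -> Prop) m :
  (forall p, S p -> exists s, p = 'X_[s]) ->
  ideal_gen S 'X_[m] -> exists s, S 'X_[s] /\ (s <= m)%MM.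
Proof.
move=> hS [l [hl e]].
suff : (exists s, S 'X_[s] /\ (s <= m)%MM) \/ (\sum_(q <- l) q.1 * q.2)@_m = 0.
  case=> // h; move: h; rewrite -e mcoeffX eqxx => /eqP; by rewrite oner_eq0.
elim: l hl {e} => [|q l IH] hl; first by right; rewrite big_nil mcoeff0.
have [h|h] : (exists s, S 'X_[s] /\ (s <= m)%MM) \/ (\sum_(q <- l) q.1 * q.2)@_m = 0.
  by apply: IH => q' q'l; apply: hl; rewrite inE q'l orbT.
  by left.
have Sq : S q.2 by apply: hl; rewrite inE eqxx.
have [s es] := hS _ Sq.
case hsm: (s <= m)%MM.
  by left; exists s; rewrite -es.
by right; rewrite big_cons mcoeffD h addr0 es coefMX0 // hsm.
Qed.

Lemma var_idealX (F : {set 'I_n}) m :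
  var_ideal (K:=K) F 'X_[m] <-> exists2 i, i \in F & m i != 0%N.
Proof.
split.
  move/ideal_gen_X => [].
    by move=> p [i _ ->]; exists U_(i)%MM.
  move=> s [[i iF /mpolyX_inj es] le]; exists i => //.
  by rewrite -lep1mP -es.
move=> [i iF mi]; exists [:: ('X_[m - U_(i)], 'X_i)]; split.
  by move=> q; rewrite inE => /eqP -> /=; exists i.
by rewrite big_seq1 /= -mpolyXD submK // lep1mP.
Qed.

Definition hitsM (ind : {set 'I_n} -> bool) (m : 'X_{1..n}) :=
  forall F, is_basis ind F -> exists2 i, i \in F & m i != 0%N.

Lemma JmatX ind m : Jmat (K:=K) ind 'X_[m] <-> hitsM ind m.
Proof.
split=> h F hF; first by apply/var_idealX; apply: h.
by apply/var_idealX; apply: h.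
Qed.

Lemma mon_idealX (S : 'X_{1..n} -> Prop) m :
  mon_ideal (K:=K) S 'X_[m] <-> exists s, S s /\ (s <= m)%MM.
Proof.
split.
  move/ideal_gen_X => [].
    by move=> p [s _ ->]; exists s.
  by move=> s [[s' Ss' /mpolyX_inj es] le]; exists s; split => //; rewrite es.
move=> [s [Ss le]]; exists [:: ('X_[m - s], 'X_[s])]; split.
  by move=> q; rewrite inE => /eqP -> /=; exists s.
by rewrite big_seq1 /= -mpolyXD submK.
Qed.

End Alg.
Local Close Scope ring_scope.

Section Mat.
Variable n : nat.
Variable ind : {set 'I_n} -> bool.
Hypothesis hM : is_matroid setT ind.

Lemma basis_card B I : is_basis ind B -> ind I -> #|I| <= #|B|.
Proof.
case: hM => _ _ _ aug [indB maxB] indI.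
rewrite leqNgt; apply/negP => lt.
have [x /setDP [xI xB] indxB] := aug B I indB indI lt.
have e := maxB _ indxB (subsetUr _ _).
by move: xB; rewrite -e setU11.
Qed.

Lemma basis_ext A B : ind A -> is_basis ind B ->
  exists B', [/\ is_basis ind B', A \subset B' & B' \subset A :|: B].
Proof.
move=> indA hB; case: (hM) => _ _ _ aug.
pose P I := [&& ind I, A \subset I & I \subset A :|: B].
have PA : P A by rewrite /P indA subxx subsetUl.
case: (@arg_maxnP _ A P (fun I => #|I|) PA) => I /and3P [indI AI IAB] maxI.
have cBI : #|B| <= #|I|.
  rewrite leqNgt; apply/negP => lt.
  have [x /setDP [xB xI] indxI] := aug I B indI hB.1 lt.
  have : P (x |: I).
    rewrite /P indxI (subset_trans AI (subsetUr _ _)) /=.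
    by rewrite subUset sub1set inE xB orbT IAB.
  move/maxI; rewrite cardsU1 xI /=; by rewrite ltnn.
exists I; split => //; split => // J indJ IJ.
apply/eqP; rewrite eq_sym eqEcard IJ /=.
exact: leq_trans (basis_card hB indJ) cBI.
Qed.

Lemma contr_basis A B : ind A -> is_basis ind B -> A \subset B ->
  is_basis (contr_ind setT ind A) (B :\: A).
Proof.
move=> indA [indB maxB] AB.
have eB : B :\: A :|: A = B.
  apply/setP => x; rewrite !inE; case xA: (x \in A); last by rewrite orbF.
  by rewrite orbT (subsetP AB).
split.
  by rewrite /contr_ind setSD ?subsetT // eB.
move=> I /andP [IA indIA] BI.
have e : I :|: A = B.
  apply: maxB => //; rewrite -{1}eB; exact: setSU.
apply/setP => x; rewrite -e !inE.
case xA: (x \in A) => /=; last by rewrite orbF.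
by apply/negP => xI; move: (subsetP IA x xI); rewrite !inE xA.
Qed.

Lemma contr_basis_inv A F : is_basis (contr_ind setT ind A) F ->
  is_basis ind (F :|: A) /\ [disjoint F & A].
Proof.
move=> [/andP [FA indFA] maxF].
have dFA : [disjoint F & A].
  apply/pred0P => x /=; apply/negP => /andP [xF xA].
  by move: (subsetP FA x xF); rewrite !inE xA.
split => //; split => // J indJ FAJ.
have AJ : A \subset J by exact: subset_trans (subsetUr _ _) FAJ.
have eJ : J :\: A :|: A = J.
  apply/setP => x; rewrite !inE; case xA: (x \in A); last by rewrite orbF.
  by rewrite orbT (subsetP AJ).
have cJ : contr_ind setT ind A (J :\: A).
  by rewrite /contr_ind setSD ?subsetT // eJ.
have FJ : F \subset J :\: A.
  apply/subsetP => x xF; rewrite inE (subsetP FAJ) ?inE ?xF // andbT.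
  by apply/negP => xA; move/pred0P: dFA => /(_ x); rewrite /= xF xA.
by rewrite -(maxF _ cJ FJ) eJ.
Qed.

End Mat.

Section Main.
Variable n : nat.
Variable K : fieldType.
Variable ind : {set 'I_n} -> bool.
Hypothesis hM : is_matroid setT ind.
Variable A : {set 'I_n}.
Hypothesis indA : ind A.

Lemma K1 (m : 'X_{1..n}) : hitsM (contr_ind setT ind A) m ->
  forall B, is_basis ind B -> exists2 i, i \in B & (m i != 0%N) && (i \notin A).
Proof.
move=> h B hB.
have [B' [hB' AB' B'AB]] := basis_ext hM indA hB.
have [i] := h _ (contr_basis indA hB' AB').
rewrite inE => /andP [iA iB'] mi; exists i; last by rewrite mi.
by move: (subsetP B'AB i iB'); rewrite inE (negbTE iA).
Qed.

Lemma K2 (m : 'X_{1..n}) : (forall i, i \in A -> m i = 0%N) -> hitsM ind m ->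
  hitsM (contr_ind setT ind A) m.
Proof.
move=> mA h F hF; have [hFA _] := contr_basis_inv hF.
have [i] := h _ hFA; rewrite inE => /orP [iF|iA] mi; first by exists i.
by rewrite mA in mi.
Qed.

Lemma main_eq m :
  mingens (Jmat (K:=K) (contr_ind setT ind A)) m <->
  mingens (Jmat (K:=K) ind) m /\ (forall i, i \in A -> m i = 0%N).
Proof.
split.
  move=> [/JmatX hm minm].
  pose m' := [multinom (if i \in A then 0%N else m i) | i < n].
  have m'le : (m' <= m)%MM.
    by apply/mnm_lepP => i; rewrite mnmE; case: (i \in A).
  have hm' : hitsM (contr_ind setT ind A) m'.
    apply: K2.
      by move=> i iA; rewrite mnmE iA.
    move=> B hB; have [i iB /andP [mi iA]] := K1 hm hB.
    by exists i => //; rewrite mnmE (negbTE iA).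
  have e : m' = m by apply: minm => //; apply/JmatX.
  have mA : forall i, i \in A -> m i = 0%N.
    by move=> i iA; rewrite -e mnmE iA.
  split => //; split.
    apply/JmatX => B hB; have [i iB /andP [mi _]] := K1 hm hB.
    by exists i.
  move=> m'' /JmatX h'' le''; apply: minm => //; apply/JmatX; apply: K2 => //.
  move=> i iA; move/mnm_lepP: le'' => /(_ i); rewrite mA //.
  by rewrite leqn0 => /eqP.
move=> [[/JmatX hm minm] mA]; split.
  by apply/JmatX; apply: K2.
move=> m'' /JmatX h'' le''; apply: minm => //; apply/JmatX => B hB.
have [i iB /andP [mi _]] := K1 h'' hB; by exists i.
Qed.

End Main.

Section Div.
Variable n : nat.
Variable K : fieldType.

Lemma mingens_mon (I : {mpoly K[n]} -> Prop) (S : 'X_{1..n} -> Prop) m :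
  (forall s, S s -> mingens I s) ->
  mingens (mon_ideal (K:=K) S) m <-> S m.
Proof.
move=> hS; split.
  move=> [/mon_idealX [s [Ss le]] minm].
  suff <- : s = m by [].
  apply: minm => //; apply/mon_idealX; exists s; split => //; exact: lepm_refl.
move=> Sm; split.
  by apply/mon_idealX; exists m; split => //; exact: lepm_refl.
move=> m' /mon_idealX [s [Ss le]] le'.
have esm : s = m.
  by apply: (hS m Sm).2; [exact: (hS s Ss).1 | exact: lepm_trans le le'].
by apply: lepm_anti => //; rewrite -esm.
Qed.

End Div.
Local Open Scope ring_scope.

Theorem corollary2p19 (n : nat) (K : fieldType) (ind : {set 'I_n} -> bool)
  (hM : is_matroid setT ind) (v : 'I_n) (hv : ind [set v]) :
  let J := Jmat (K:=K) ind in
  let Jv := Jmat (K:=K) (contr_ind setT ind [set v]) in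
  let Jdiv := mon_ideal (K:=K) (fun m => mingens J m /\ ~ mingens Jv m) in
  (forall m, mingens Jv m <-> mingens J m /\ m v = 0%N) /\
  (forall m, mingens Jdiv m <-> mingens J m /\ (0 < m v)%N) /\
  (forall A : {set 'I_n}, ind A ->
     forall m, mingens (Jmat (K:=K) (contr_ind setT ind A)) m <->
               mingens J m /\ (forall i, i \in A -> m i = 0%N)).
Proof.
move=> J Jv Jdiv.
have P1 : forall m, mingens Jv m <-> mingens J m /\ m v = 0%N.
  move=> m; rewrite /Jv (main_eq K hM hv m); split.
    by move=> [h1 h2]; split => //; apply: h2; rewrite inE.
  by move=> [h1 h2]; split => // i; rewrite inE => /eqP ->.
split => //; split; last by move=> A indA m; exact: main_eq.
move=> m; rewrite /Jdiv (mingens_mon (I := J)); last by move=> s [].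
split.
  move=> [h1 h2]; split => //; rewrite lt0n; apply/negP => /eqP e.
  by apply: h2; apply/P1.
move=> [h1 h2]; split => // /P1 [_ e]; by rewrite e in h2.
Qed.
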